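(* Let $\varphi,\varphi_0:\mathbb{R}^d\to\mathbb{R}$, $p$ a positive integer, $w\in\mathbb{R}^d$, and $\hat\varphi_p(x;w):=\sum_{i=0}^p\frac1{i!}\nabla^i\varphi(w)[x-w]^{\otimes i}$. Suppose $\nabla^p\varphi$ is Lipschitz, $x_\varphi\in\arg\min_x\varphi(x)+\varphi_0(x)$, and $$x_{\hat\varphi_p}\in\arg\min_x\hat\varphi_p(x;w)+\frac{\mathrm{Lip}(\nabla^p\varphi)}{(p+1)!}\|x-w\|_2^{p+1}+\varphi_0(x).$$ If $\hat\varphi_p(\cdot;w)+\frac{\mathrm{Lip}(\nabla^p\varphi)}{(p+1)!}\|\cdot-w\|_2^{p+1}+\varphi_0$ has $\nu(r)=\mu r^q$ gradient growth for some $\mu>0$ and $q>0$, then $$\|x_\varphi-x_{\hat\varphi_p}\|_2^{q-1}\le\frac{2\,\mathrm{Lip}(\nabla^p\varphi)}{\mu}\frac1{p!}\|x_\varphi-w\|_2^p.$$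
   Context: For a matrix or tensor $H$, $\|H\|_{op}:=\sup_{v\ne0}\|H[v]\|_{op}/\|v\|_2$ (with $\|v\|_{op}=\|v\|_2$ for vectors), and $\mathrm{Lip}(f):=\sup_{x\ne y}\|f(x)-f(y)\|_{op}/\|x-y\|_2$. A function $\psi$ has $\nu$ gradient growth if it is subdifferentiable and $\nu(\|x-y\|_2)\le\langle y-x,u-v\rangle$ for all $x,y\in\mathbb{R}^d$ and all $u\in\partial\psi(y)$, $v\in\partial\psi(x)$. *)

(* Defs.v *)
From HB Require Import structures.
From mathcomp Require Import all_boot all_order all_algebra.
From mathcomp Require Import all_classical all_reals all_analysis.
Set Implicit Arguments. Unset Strict Implicit. Unset Printing Implicit Defensive.
Import Order.TTheory GRing.Theory Num.Theory.
Import numFieldNormedType.Exports.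
Local Open Scope classical_set_scope.
Local Open Scope ring_scope.

Section Defs.
Variables (R : realType) (d : nat).
Notation V := 'rV[R]_d.

Definition dot (u v : V) : R := \sum_(i < d) u ord0 i * v ord0 i.
Definition norm2 (v : V) : R := Num.sqrt (dot v v).

(* k-th derivative of f at x applied to the directions vs = [v1; ...; vk]:
   nabla^k f(x)[v1,...,vk], defined by iterated directional derivatives. *)
Fixpoint Dk (k : nat) (f : V -> R) : V -> seq V -> R :=
  match k with
  | 0 => fun x _ => f x
  | k'.+1 => fun x vs => 'D_(head 0 vs) (fun y => Dk k' f y (behead vs)) x
  end.

(* Operator norm of a k-tensor T (as a k-linear form):
   sup of |T[v1,...,vk]| over vectors of Euclidean norm <= 1
   (this is what the recursive definition ||H||_op = sup ||H[v]||_op/||v||,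
    with ||v||_op = ||v||_2, unfolds to). *)
Definition opnorm (k : nat) (T : seq V -> R) : R :=
  sup [set `|T vs| | vs in [set vs : seq V | size vs = k /\
                                     forall v, v \in vs -> norm2 v <= 1]].

Definition LipD (p : nat) (f : V -> R) : R :=
  sup [set r | exists x y : V, x != y /\
         r = opnorm p (fun vs => Dk p f x vs - Dk p f y vs) / norm2 (x - y)].

Definition taylor (p : nat) (f : V -> R) (w x : V) : R :=
  \sum_(i < p.+1) (i`!%:R)^-1 * Dk i f w (nseq i (x - w)).

Definition subdiff (psi : V -> R) (x : V) : set V :=
  [set u | forall y, psi x + dot u (y - x) <= psi y].

Definition subdifferentiable (psi : V -> R) : Prop :=
  forall x, exists u, subdiff psi x u.

Definition gradient_growth (nu : R -> R) (psi : V -> R) : Prop :=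
  subdifferentiable psi /\
  forall x y u v, subdiff psi y u -> subdiff psi x v ->
    nu (norm2 (x - y)) <= dot (y - x) (u - v).

End Defs.

(* Main.v *)
Require Import Defs.
From HB Require Import structures.
From mathcomp Require Import all_boot all_order all_algebra.
From mathcomp Require Import all_classical all_reals all_analysis.
From mathcomp Require Import ring lra.
Set Implicit Arguments. Unset Strict Implicit. Unset Printing Implicit Defensive.
Import Order.TTheory GRing.Theory Num.Theory.
Import numFieldNormedType.Exports.
Local Open Scope classical_set_scope.
Local Open Scope ring_scope.

Section Eucl.
Variables (R : realType) (d : nat).
Local Notation V := 'rV[R]_d.

Lemma dotC (u v : V) : dot u v = dot v u.
Proof. by apply: eq_bigr => i _; rewrite mulrC. Qed.

Lemma dotDr (u v w : V) : dot u (v + w) = dot u v + dot u w.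
Proof. by rewrite /dot -big_split; apply: eq_bigr => i _; rewrite !mxE mulrDr. Qed.

Lemma dotZr (a : R) (u v : V) : dot u (a *: v) = a * dot u v.
Proof. by rewrite /dot mulr_sumr; apply: eq_bigr => i _; rewrite !mxE mulrCA. Qed.

Lemma dotNr (u v : V) : dot u (- v) = - dot u v.
Proof. by rewrite -scaleN1r dotZr mulN1r. Qed.

Lemma dotBr (u v w : V) : dot u (v - w) = dot u v - dot u w.
Proof. by rewrite dotDr dotNr. Qed.

Lemma dot0r (u : V) : dot u 0 = 0.
Proof. by rewrite -(scale0r 0) dotZr mul0r. Qed.

Lemma dotDl (u v w : V) : dot (v + w) u = dot v u + dot w u.
Proof. by rewrite dotC dotDr !(dotC u). Qed.

Lemma dotZl (a : R) (u v : V) : dot (a *: v) u = a * dot v u.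
Proof. by rewrite dotC dotZr dotC. Qed.

Lemma dotNl (u v : V) : dot (- v) u = - dot v u.
Proof. by rewrite dotC dotNr dotC. Qed.

Lemma dotBl (u v w : V) : dot (v - w) u = dot v u - dot w u.
Proof. by rewrite dotDl dotNl. Qed.

Lemma dot0l (u : V) : dot 0 u = 0.
Proof. by rewrite dotC dot0r. Qed.

Lemma dotvv_ge0 (v : V) : 0 <= dot v v.
Proof. by apply: sumr_ge0 => i _; rewrite -expr2 sqr_ge0. Qed.

Lemma norm2_ge0 (v : V) : 0 <= norm2 v.
Proof. exact: sqrtr_ge0. Qed.

Lemma norm2_sqr (v : V) : norm2 v ^+ 2 = dot v v.
Proof. by rewrite /norm2 sqr_sqrtr // dotvv_ge0. Qed.

Lemma norm2Z (a : R) (v : V) : norm2 (a *: v) = `|a| * norm2 v.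
Proof.
by rewrite /norm2 dotZr dotZl mulrA -expr2 sqrtrM ?sqr_ge0 // sqrtr_sqr.
Qed.

Lemma norm2N (v : V) : norm2 (- v) = norm2 v.
Proof. by rewrite -scaleN1r norm2Z normrN1 mul1r. Qed.

Lemma norm2B (u v : V) : norm2 (u - v) = norm2 (v - u).
Proof. by rewrite -norm2N opprB. Qed.

Lemma norm20 : norm2 (0 : V) = 0.
Proof. by rewrite /norm2 dot0r sqrtr0. Qed.

Lemma dotvv_eq0 (v : V) : dot v v = 0 -> v = 0.
Proof.
move=> h; apply/rowP => i; rewrite mxE.
have /eqP : v ord0 i * v ord0 i = 0.
  apply: (psumr_eq0P _ h) => // j _; by rewrite -expr2 sqr_ge0.
by rewrite mulf_eq0 orbb => /eqP.
Qed.

Lemma norm2_eq0 (v : V) : norm2 v = 0 -> v = 0.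
Proof.
move=> h; apply: dotvv_eq0; by rewrite -norm2_sqr h expr0n.
Qed.

Lemma norm2_gt0 (v : V) : v != 0 -> 0 < norm2 v.
Proof.
move=> v0; rewrite lt_neqAle norm2_ge0 andbT eq_sym; apply/negP => /eqP h.
by move: v0; rewrite (norm2_eq0 h) eqxx.
Qed.

Lemma coord_le_norm2 (v : V) i : `|v ord0 i| <= norm2 v.
Proof.
rewrite -sqrtr_sqr /norm2 ler_sqrt ?dotvv_ge0 // /dot (bigD1 i) //= expr2.
by rewrite lerDl sumr_ge0 // => j _; rewrite -expr2 sqr_ge0.
Qed.

Lemma CS (u v : V) : dot u v <= norm2 u * norm2 v.
Proof.
have key : dot u v ^+ 2 <= dot u u * dot v v.
  have [v0|v0] := eqVneq (dot v v) 0.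
    by rewrite (dotvv_eq0 v0) !dot0r expr0n mulr0.
  have vpos : 0 < dot v v by rewrite lt_neqAle eq_sym v0 dotvv_ge0.
  have hl : (dot u v / dot v v) * dot v v = dot u v by rewrite mulfVK.
  move: (dot u v / dot v v) hl => l hl.
  have := dotvv_ge0 (u - l *: v).
  rewrite dotBl !dotBr !dotZl !dotZr (dotC v u) => h.
  have h2 := mulr_ge0 (ltW vpos) h.
  move: h2 hl vpos; set A := dot u u; set B := dot u v; set C := dot v v.
  move=> h2 hl vpos; nra.
have := norm2_ge0 u; have := norm2_ge0 v.
rewrite -norm2_sqr -(norm2_sqr v) in key.
move=> hv hu; have [hd|hd] := lerP (dot u v) 0.
  by apply: le_trans hd _; rewrite mulr_ge0.
move: key; rewrite -?norm2_sqr => key.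
have hm : 0 <= norm2 u * norm2 v by rewrite mulr_ge0.
nra.
Qed.

Lemma norm2D (u v : V) : norm2 (u + v) <= norm2 u + norm2 v.
Proof.
rewrite -ler_sqr ?nnegrE ?addr_ge0 ?norm2_ge0 //.
rewrite norm2_sqr dotDl !dotDr (dotC v u) -!norm2_sqr sqrrD.
have := CS u v; lra.
Qed.

End Eucl.
Section ML.
Variables (R : realType) (d : nat).
Local Notation V := 'rV[R]_d.

Fixpoint ML (k : nat) (T : seq V -> R) : Prop :=
  match k with
  | 0 => True
  | k'.+1 => (forall (a : R) (u v : V) vs, T ((a *: u + v) :: vs) = a * T (u :: vs) + T (v :: vs))
             /\ forall u, ML k' (fun vs => T (u :: vs))
  end.

Lemma ML_sub k (T S : seq V -> R) : ML k T -> ML k S -> ML k (fun vs => T vs - S vs).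
Proof.
elim: k T S => [//|k IH] T S /= [lT mT] [lS mS]; split.
  by move=> a u v vs; rewrite lT lS; ring.
by move=> u; apply: IH.
Qed.

Lemma ML0 k (T : seq V -> R) vs : ML k.+1 T -> T (0 :: vs) = 0.
Proof.
move=> [lT _]; have := lT 1 0 0 vs; rewrite scale1r addr0 mul1r => h.
by move: h; set x := T (0 :: vs); move=> h; lra.
Qed.

Lemma MLZ k (T : seq V -> R) a u vs : ML k.+1 T -> T (a *: u :: vs) = a * T (u :: vs).
Proof.
move=> hT; have [lT _] := hT; by rewrite -[a *: u]addr0 lT (ML0 _ hT) addr0.
Qed.

Lemma MLD k (T : seq V -> R) u v vs : ML k.+1 T -> T (u + v :: vs) = T (u :: vs) + T (v :: vs).
Proof. by move=> [lT _]; rewrite -[u]scale1r lT mul1r scale1r. Qed.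

Lemma MLB k (T : seq V -> R) u v vs : ML k.+1 T -> T (u - v :: vs) = T (u :: vs) - T (v :: vs).
Proof. by move=> hT; rewrite (MLD _ _ _ hT) -scaleN1r (MLZ _ _ _ hT) mulN1r. Qed.

Lemma ML_sum k (T : seq V -> R) (c : 'I_d -> R) (e : 'I_d -> V) vs : ML k.+1 T ->
  T ((\sum_i c i *: e i) :: vs) = \sum_i c i * T (e i :: vs).
Proof.
move=> hT.
apply: (big_ind2 (fun x y => T (x :: vs) = y)).
- exact: ML0 hT.
- by move=> x1 y1 x2 y2 h1 h2; rewrite (MLD _ _ _ hT) h1 h2.
- by move=> i _; rewrite (MLZ _ _ _ hT).
Qed.

Lemma ML_bounded k (T : seq V -> R) : ML k T ->
  exists C, forall vs, size vs = k -> (forall v, v \in vs -> norm2 v <= 1) -> `|T vs| <= C.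
Proof.
elim: k T => [|k IH] T /=.
  move=> _; exists `|T [::]| => vs /size0nil -> _; exact: lexx.
move=> [lT mT].
have : forall i : 'I_d, exists C, forall vs, size vs = k ->
    (forall v, v \in vs -> norm2 v <= 1) -> `|T (delta_mx 0 i :: vs)| <= C.
  by move=> i; apply: IH.
move=> /choice [C hC]; exists (\sum_i C i) => [[//|v vs]] /= [sz] hn.
have hT : ML k.+1 T by split.
rewrite [v]row_sum_delta (ML_sum _ _ _ hT).
apply: (le_trans (ler_norm_sum _ _ _)); apply: ler_sum => i _.
rewrite normrM.
have h1 : `|v 0 i| <= 1 by apply: le_trans (coord_le_norm2 _ _) (hn v _); rewrite inE eqxx.
have h2 : `|T (delta_mx 0 i :: vs)| <= C i.
  by apply: hC => // x xin; apply: hn; rewrite inE xin orbT.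
apply: le_trans h2; rewrite ler_piMl //.
Qed.

End ML.
Section ML2.
Variables (R : realType) (d : nat).
Local Notation V := 'rV[R]_d.

Lemma ML_scale k (T : seq V -> R) : ML k T -> forall vs, size vs = k ->
  exists us, [/\ size us = k, (forall v, v \in us -> norm2 v <= 1) &
    `|T vs| <= \prod_(v <- vs) norm2 v * `|T us|].
Proof.
elim: k T => [|k IH] T hT.
  move=> vs /size0nil ->; exists [::]; split => //.
  by rewrite big_nil mul1r.
move=> [//|v vs] /= [sz].
have [->|v0] := eqVneq v 0.
  exists (nseq k.+1 0); split.
  - by rewrite size_nseq.
  - by move=> x /nseqP [-> _]; rewrite norm20.
  - by rewrite (ML0 _ hT) normr0 mulr_ge0 // prodr_ge0 // => x _; exact: norm2_ge0.
have np := norm2_gt0 v0.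
pose v' := (norm2 v)^-1 *: v.
have ev : v = norm2 v *: v' by rewrite /v' scalerA mulfV ?gt_eqF // scale1r.
have nv' : norm2 v' = 1 by rewrite /v' norm2Z ger0_norm ?invr_ge0 ?ltW // mulVf ?gt_eqF.
have hT' : ML k (fun vs => T (v' :: vs)) by case: hT => _ /(_ v').
have [us [szu hu hb]] := IH _ hT' vs sz.
exists (v' :: us); split => /=.
- by rewrite szu.
- by move=> x; rewrite inE => /orP [/eqP ->|/hu //]; rewrite nv'.
- rewrite big_cons ev (MLZ _ _ _ hT) normrM ger0_norm ?norm2_ge0 // -mulrA.
  by rewrite -ev ler_wpM2l ?norm2_ge0.
Qed.

Lemma ML_opnorm k (T : seq V -> R) : ML k T -> forall vs, size vs = k ->
  `|T vs| <= opnorm k T * \prod_(v <- vs) norm2 v.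
Proof.
move=> hT vs sz.
have [us [szu hu hb]] := ML_scale hT sz.
apply: (le_trans hb); rewrite [X in _ <= X]mulrC; apply: ler_wpM2l; first by apply: prodr_ge0 => x _; exact: norm2_ge0.
apply: sup_upper_bound; last by exists us.
split; first by exists `|T us|, us.
have [C hC] := ML_bounded hT.
by exists C => _ [ws [szw hw] <-]; apply: hC.
Qed.

Lemma opnorm_ge0 k (T : seq V -> R) : 0 <= opnorm k T.
Proof.
rewrite /opnorm.
have [hs|hs] := pselect (has_sup [set `|T vs| | vs in [set vs : seq V | size vs = k /\
                                     forall v, v \in vs -> norm2 v <= 1]]).
  have := sup_upper_bound hs; move=> ub; apply: le_trans (ub _ _).
    exact: (normr_ge0 (T (nseq k 0))).
  exists (nseq k 0) => //; split; first by rewrite size_nseq.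
  by move=> x /nseqP [-> _]; rewrite norm20.
by rewrite sup_out.
Qed.

End ML2.
Section MLD.
Variables (R : realType) (d : nat).
Local Notation V := 'rV[R]_d.

Lemma ML_D n (S : V -> seq V -> R) (y v : V) : (forall z, ML n (S z)) ->
  (forall vs, derivable (fun z => S z vs) y v) ->
  ML n (fun vs => 'D_v (fun z => S z vs) y).
Proof.
elim: n S => [//|n IH] S hS hd /=; split.
  move=> a u u' vs.
  have -> : (fun z => S z (a *: u + u' :: vs)) =
      (a \*: (fun z => S z (u :: vs))) + (fun z => S z (u' :: vs)).
    by apply: funext => z /=; have [-> _] := hS z.
  rewrite deriveD ?deriveZ //; exact: derivableZ.
move=> u; apply: (IH (fun z vs => S z (u :: vs))) => // z.
by have [_ h] := hS z; exact: h.
Qed.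

Lemma ML_Dk (phi : V -> R) (p : nat)
  (hdiff : forall k : nat, (k < p)%N -> forall (vs : seq V) (x : V),
      differentiable (fun y => Dk k phi y vs) x) :
  forall k, (k <= p)%N -> forall y, ML k (Dk k phi y).
Proof.
elim=> [//|k IH] hk y /=; split.
  move=> a u v vs.
  have hD : differentiable (fun y => Dk k phi y vs) y by apply: hdiff.
  by rewrite !deriveE // linearD linearZ.
move=> u; apply: (ML_D (S := Dk k phi)) => [z|vs].
  by apply: IH; exact: ltnW.
by apply: diff_derivable; apply: hdiff.
Qed.

Lemma line_is_derive (F : V -> R) (w b : V) (s : R) :
  derivable F (w + s *: b) b ->
  is_derive s 1 (fun t => F (w + t *: b)) ('D_b F (w + s *: b)).
Proof.
have E : (fun h : R => h^-1 *: (((fun t => F (w + t *: b)) \o shift s) (h *: 1)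
            - F (w + s *: b))) =
         (fun h : R => h^-1 *: ((F \o shift (w + s *: b)) (h *: b) - F (w + s *: b))).
  apply: funext => h /=; congr (_ *: (F _ - _)).
  by rewrite /shift /= [h *: 1]mulr1 scalerDl addrCA addrC.
move=> hF; split.
  by rewrite /derivable E.
by rewrite /derive E.
Qed.

End MLD.
Section Tay.
Variable (R : realType).

Lemma cmp01 (f g : R -> R) (df dg : R -> R) :
  (forall s : R, is_derive s (1:R) f (df s)) -> (forall s : R, is_derive s (1:R) g (dg s)) ->
  f 0 = 0 -> g 0 = 0 -> (forall s, 0 <= s <= 1 -> `|df s| <= dg s) ->
  forall s, 0 <= s <= 1 -> `|f s| <= g s.
Proof.
move=> hf hg f0 g0 hb.
have key : forall h dh : R -> R, (forall s : R, is_derive s (1:R) h (dh s)) -> h 0 = 0 ->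
    (forall s, 0 <= s <= 1 -> 0 <= dh s) -> forall s, 0 <= s <= 1 -> 0 <= h s.
  move=> h dh hh h0 hpos s /andP [s0 s1]; rewrite -h0.
  apply: (@ger0_derive1_ndecr _ h 0 1); try done.
  - move=> x; rewrite in_itv /= => /andP [x0 x1].
    by rewrite derive1E derive_val hpos // !ltW.
  - by apply: derivable_within_continuous => x _; have [] := hh x.
have h1 : forall s, 0 <= s <= 1 -> 0 <= (g - f) s.
  have hh : forall x : R, is_derive x (1:R) (g - f) (dg x - df x).
    by move=> x; exact: is_deriveB.
  apply: (key _ _ hh).
  - by rewrite /= !fctE f0 g0 subrr.
  - move=> s hs; by rewrite subr_ge0; apply: le_trans (hb s hs); exact: ler_norm.
have h2 : forall s, 0 <= s <= 1 -> 0 <= (g + f) s.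
  have hh : forall x : R, is_derive x (1:R) (g + f) (dg x + df x).
    by move=> x; exact: is_deriveD.
  apply: (key _ _ hh).
  - by rewrite /= !fctE f0 g0 addr0.
  - move=> s hs; by rewrite -lerBlDr sub0r; apply: le_trans (hb s hs); rewrite -normrN ler_norm.
move=> s hs; have := h1 s hs; have := h2 s hs; rewrite !fctE.
rewrite ler_norml => a b; apply/andP; split; lra.
Qed.

Lemma taylor1 n : forall (G : nat -> R -> R) (M : R),
  (forall k (s : R), (k < n)%N -> is_derive s (1:R) (G k) (G k.+1 s)) ->
  (forall s, 0 <= s <= 1 -> `|G n s - G n 0| <= M * s) ->
  forall s, 0 <= s <= 1 ->
  `|G 0 s - \sum_(k < n.+1) G k 0 / k`!%:R * s ^+ k| <= M * s ^+ n.+1 / n.+1`!%:R.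
Proof.
elim: n => [|n IH] G M hd hb s hs.
  rewrite big_ord_recl big_ord0 addr0 expr0 expr1 mulr1 (_ : 0`!%:R = 1) // !divr1; exact: hb.
have IH' := IH (fun k => G k.+1) M (fun k s hk => hd k.+1 s hk) hb.
pose P := \poly_(k < n.+2) (G k 0 / k`!%:R).
pose Q := \poly_(k < n.+1) (G k.+1 0 / k`!%:R).
have PQ : P^`() = Q.
  apply/polyP => i; rewrite coef_deriv !coef_poly.
  rewrite ltnS; case: ifP => _; last by rewrite mul0rn.
  rewrite factS natrM -mulr_natr; field.
  apply/andP; split; [by rewrite pnatr_eq0 -lt0n fact_gt0 | by rewrite addrC natr1 pnatr_eq0].
have hf : forall s : R, is_derive s (1:R) (G 0 - horner P) (G 1 s - Q.[s]).
  move=> x; rewrite -PQ; apply: is_deriveB; first exact: hd.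
pose c := M / n.+2`!%:R.
have hg : forall s : R, is_derive s (1:R) (horner (c *: 'X^(n.+2))) (M * s ^+ n.+1 / n.+1`!%:R).
  move=> x; apply: is_derive_eq.
  rewrite derivZ derivXn hornerZ hornerMn hornerXn /c /= factS natrM -mulr_natr.
  field; apply/andP; split; [by rewrite pnatr_eq0 -lt0n fact_gt0 | by rewrite (_ : 2 + n%:R = n.+2%:R) ?pnatr_eq0 // -natr1 -natr1; ring].
have := cmp01 hf hg _ _ _ hs.
have e1 : (G 0 - horner P) 0 = 0.
  rewrite !fctE horner_poly big_ord_recl big1 ?addr0.
    by rewrite expr0 mulr1 (_ : 0`!%:R = 1) // divr1 subrr.
  by move=> i _; rewrite expr0n mulr0.
have e2 : (c *: 'X^(n.+2)).[0] = 0 by rewrite hornerZ hornerXn expr0n mulr0.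
have e3 : forall x, 0 <= x <= 1 -> `|G 1 x - Q.[x]| <= M * x ^+ n.+1 / (n.+1)`!%:R.
  move=> x hx; rewrite /Q horner_poly; exact: IH'.
have H := cmp01 hf hg e1 e2 e3 hs.
have E1 : (G 0 - horner P) s = G 0 s - \sum_(k < n.+2) G k 0 / k`!%:R * s ^+ k.
  by rewrite !fctE horner_poly.
have E2 : (c *: 'X^(n.+2)).[s] = M * s ^+ n.+2 / (n.+2)`!%:R.
  by rewrite hornerZ hornerXn /c mulrAC.
by rewrite -E1 -E2.
Qed.

End Tay.
Section Core.
Variables (R : realType) (d : nat).
Local Notation V := 'rV[R]_d.

Lemma prod_nseq k (x : V) : \prod_(v <- nseq k x) norm2 v = norm2 x ^+ k.
Proof. by elim: k => [|k IH]; rewrite ?big_nil ?expr0 //= big_cons IH exprS. Qed.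

Lemma tele k : forall (T : seq V -> R) (C : R) (a b : V) (rho : R), ML k T -> 0 <= C ->
  (forall vs, size vs = k -> `|T vs| <= C * \prod_(v <- vs) norm2 v) ->
  norm2 a <= rho -> norm2 b <= rho ->
  `|T (nseq k b) - T (nseq k a)| <= k%:R * C * norm2 (b - a) * rho ^+ k.-1.
Proof.
elim: k => [|k IH] T C a b rho hT hC hb ha hbr.
  by rewrite subrr normr0 mul0r mul0r mul0r.
have rho0 : 0 <= rho by apply: le_trans ha; exact: norm2_ge0.
rewrite /= -[X in T (X :: _)](subrK a b) (MLD _ _ _ hT).
have E : forall x y z : R, x + y - z = x + (y - z) by move=> *; ring.
rewrite E.
have hTa : ML k (fun vs => T (a :: vs)) by case: hT => _; apply.
have h1 : `|T (b - a :: nseq k b)| <= C * norm2 (b - a) * rho ^+ k.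
  apply: le_trans (hb _ _) _; first by rewrite /= size_nseq.
  rewrite big_cons prod_nseq mulrA ler_wpM2l ?mulr_ge0 ?norm2_ge0 //.
  by rewrite lerXn2r ?nnegrE ?norm2_ge0.
have hba : forall vs, size vs = k -> `|T (a :: vs)| <= C * norm2 a * \prod_(v <- vs) norm2 v.
  move=> vs sz; apply: le_trans (hb (a :: vs) _) _; first by rewrite /= sz.
  by rewrite big_cons mulrA.
have h2 := IH (fun vs => T (a :: vs)) (C * norm2 a) a b rho hTa
  (mulr_ge0 hC (norm2_ge0 _)) hba ha hbr.
apply: le_trans (ler_normD _ _) _.
apply: le_trans (lerD h1 h2) _.
have h3 : k%:R * (C * norm2 a) * norm2 (b - a) * rho ^+ k.-1 <= k%:R * C * norm2 (b - a) * rho ^+ k.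
  case: k {IH hT hb hTa h1 h2 hba} => [|k]; first by rewrite !mul0r.
  rewrite /= exprS.
  have hk : 0 <= k.+1%:R :> R by [].
  have := mulr_ge0 (mulr_ge0 (mulr_ge0 (mulr_ge0 hk hC) (norm2_ge0 (b - a)))
     (exprn_ge0 k rho0)) (ltac:(by rewrite subr_ge0) : 0 <= rho - norm2 a).
  move: (rho ^+ k) (norm2 a) (norm2 (b - a)) (k.+1%:R : R) => X Y Z K; nra.
rewrite -natr1; move: h3; lra.
Qed.

End Core.
Section Core2.
Variables (R : realType) (d : nat).
Local Notation V := 'rV[R]_d.
Variables (phi : V -> R) (p : nat).
Hypothesis hdiff : forall k : nat, (k < p)%N -> forall (vs : seq V) (x : V),
      differentiable (fun y => Dk k phi y vs) x.
Hypothesis hlip : exists L : R, forall x y : V,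
      opnorm p (fun vs => Dk p phi x vs - Dk p phi y vs) <= L * norm2 (x - y).

Local Notation L := (LipD p phi).

Lemma LipD_ge0 : 0 <= L.
Proof.
rewrite /LipD.
set S := [set r | _].
have [hs|hs] := pselect (has_sup S); last by rewrite sup_out.
have [r Sr] := hs.1.
apply: le_trans (sup_upper_bound hs Sr).
case: Sr => x [y [_ ->]]; apply: divr_ge0; [exact: opnorm_ge0|exact: norm2_ge0].
Qed.

Lemma MLp y : ML p (Dk p phi y).
Proof. exact: (ML_Dk hdiff (leqnn p)). Qed.

Lemma Dbound x y vs : size vs = p ->
  `|Dk p phi x vs - Dk p phi y vs| <= L * norm2 (x - y) * \prod_(v <- vs) norm2 v.
Proof.
move=> sz.
have hP : 0 <= \prod_(v <- vs) norm2 v by apply: prodr_ge0 => v _; exact: norm2_ge0.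
have [->|xy] := eqVneq x y.
  by rewrite subrr normr0 mulr_ge0 // mulr_ge0 ?LipD_ge0 ?norm2_ge0.
have hML : ML p (fun vs => Dk p phi x vs - Dk p phi y vs) by apply: ML_sub; exact: MLp.
apply: le_trans (ML_opnorm hML sz) _.
rewrite ler_wpM2r //.
have np : 0 < norm2 (x - y) by apply: norm2_gt0; rewrite subr_eq0.
rewrite -ler_pdivrMr //.
apply: sup_upper_bound; last by exists x, y.
split; first by exists (opnorm p (fun vs => Dk p phi x vs - Dk p phi y vs) / norm2 (x - y)), x, y.
have [L0 hL0] := hlip.
exists L0 => _ [x' [y' [xy' ->]]].
have np' : 0 < norm2 (x' - y') by apply: norm2_gt0; rewrite subr_eq0.
by rewrite ler_pdivrMr.
Qed.

Lemma pow_aux k (Y rho : R) : 0 <= Y -> Y <= rho ->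
  k%:R * Y * rho ^+ k.-1 <= k%:R * rho ^+ k.
Proof.
case: k => [|k] hY hYr; first by rewrite !mul0r.
have rho0 : 0 <= rho by apply: le_trans hYr.
rewrite /= exprS -mulrA; apply: ler_wpM2l => //; apply: ler_wpM2r => //; exact: exprn_ge0.
Qed.

Lemma Gbound (w a e : V) (t s : R) : 0 <= t -> 0 <= s <= 1 ->
  `|(Dk p phi (w + s *: (a + t *: e)) (nseq p (a + t *: e)) - Dk p phi (w + s *: a) (nseq p a)) -
    (Dk p phi (w + 0 *: (a + t *: e)) (nseq p (a + t *: e)) - Dk p phi (w + 0 *: a) (nseq p a))|
   <= L * t * norm2 e * p.+1%:R * (norm2 a + t * norm2 e) ^+ p * s.
Proof.
move=> ht /andP[s0 s1]; rewrite !scale0r !addr0.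
set b := a + t *: e.
set D := Dk p phi.
set rho := norm2 a + t * norm2 e.
have hb : norm2 b <= rho.
  by rewrite /b; apply: le_trans (norm2D _ _) _; rewrite norm2Z ger0_norm.
have ha : norm2 a <= rho by rewrite /rho lerDl mulr_ge0 ?norm2_ge0.
have rho0 : 0 <= rho by apply: le_trans ha; exact: norm2_ge0.
have E : D (w + s *: b) (nseq p b) - D (w + s *: a) (nseq p a) - (D w (nseq p b) - D w (nseq p a))
   = (D (w + s *: b) (nseq p b) - D (w + s *: a) (nseq p b)) +
     ((D (w + s *: a) (nseq p b) - D w (nseq p b)) - (D (w + s *: a) (nseq p a) - D w (nseq p a))).
  by rewrite /D; ring.
rewrite E; apply: le_trans (ler_normD _ _) _.
have h1 : `|D (w + s *: b) (nseq p b) - D (w + s *: a) (nseq p b)| <= L * (s * (t * norm2 e)) * rho ^+ p.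
  apply: le_trans (Dbound _ _ _) _; first by rewrite size_nseq.
  rewrite prod_nseq.
  have -> : w + s *: b - (w + s *: a) = s *: (t *: e).
    by rewrite /b scalerDr opprD addrACA subrr add0r addrC addKr.
  rewrite !norm2Z !ger0_norm //; apply: ler_wpM2l; first by rewrite mulr_ge0 ?LipD_ge0 ?mulr_ge0 ?norm2_ge0.
  by rewrite lerXn2r ?nnegrE ?norm2_ge0.
have h2 : `|(D (w + s *: a) (nseq p b) - D w (nseq p b)) - (D (w + s *: a) (nseq p a) - D w (nseq p a))|
    <= p%:R * (L * (s * norm2 a)) * (t * norm2 e) * rho ^+ p.-1.
  have hT : ML p (fun vs => D (w + s *: a) vs - D w vs) by apply: ML_sub; exact: MLp.
  have hC : 0 <= L * (s * norm2 a) by rewrite mulr_ge0 ?LipD_ge0 ?mulr_ge0 ?norm2_ge0.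
  have hbd : forall vs, size vs = p -> `|D (w + s *: a) vs - D w vs| <= L * (s * norm2 a) * \prod_(v <- vs) norm2 v.
    move=> vs sz; apply: le_trans (Dbound _ _ sz) _.
    by rewrite addrC addKr norm2Z ger0_norm.
  have := tele hT hC hbd ha hb.
  have -> : a + t *: e - a = t *: e by rewrite addrAC subrr add0r.
  by rewrite norm2Z (ger0_norm ht).
apply: le_trans (lerD h1 h2) _.
have h3 := pow_aux p (norm2_ge0 a) ha.
have hL := LipD_ge0.
have hte : 0 <= t * norm2 e by rewrite mulr_ge0 ?norm2_ge0.
have := mulr_ge0 (mulr_ge0 hL s0) hte.
move: h3; set K := L * s * (t * norm2 e).
have -> : p%:R * (L * (s * norm2 a)) * (t * norm2 e) * rho ^+ p.-1 = K * (p%:R * norm2 a * rho ^+ p.-1).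
  by rewrite /K; ring.
have -> : L * (s * (t * norm2 e)) * rho ^+ p = K * rho ^+ p by rewrite /K; ring.
have -> : L * t * norm2 e * p.+1%:R * rho ^+ p * s = K * (p%:R * rho ^+ p) + K * rho ^+ p.
  by rewrite /K -natr1; ring.
move=> h3 hK; have := ler_wpM2l hK h3; lra.
Qed.

End Core2.
Section Core3.
Variables (R : realType) (d : nat).
Local Notation V := 'rV[R]_d.
Variables (phi : V -> R) (p : nat).
Hypothesis hdiff : forall k : nat, (k < p)%N -> forall (vs : seq V) (x : V),
      differentiable (fun y => Dk k phi y vs) x.
Hypothesis hlip : exists L : R, forall x y : V,
      opnorm p (fun vs => Dk p phi x vs - Dk p phi y vs) <= L * norm2 (x - y).

Local Notation L := (LipD p phi).

Lemma Rdiff (w a e : V) (t : R) : 0 <= t ->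
  `|(phi (w + (a + t *: e)) - taylor p phi w (w + (a + t *: e))) - (phi (w + a) - taylor p phi w (w + a))|
   <= L * t * norm2 e * (norm2 a + t * norm2 e) ^+ p / p`!%:R.
Proof.
move=> ht; set b := a + t *: e.
pose G := fun k (s : R) => Dk k phi (w + s *: b) (nseq k b) - Dk k phi (w + s *: a) (nseq k a).
have hd : forall k (s : R), (k < p)%N -> is_derive s (1:R) (G k) (G k.+1 s).
  move=> k s hk.
  have d1 : derivable (fun z => Dk k phi z (nseq k b)) (w + s *: b) b.
    by apply: diff_derivable; exact: hdiff.
  have d2 : derivable (fun z => Dk k phi z (nseq k a)) (w + s *: a) a.
    by apply: diff_derivable; exact: hdiff.
  have h1 := line_is_derive d1.
  have h2 := line_is_derive d2.
  have -> : G k = (fun s => Dk k phi (w + s *: b) (nseq k b)) - (fun s => Dk k phi (w + s *: a) (nseq k a)).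
    by apply: funext => x; rewrite /G !fctE.
  exact: is_deriveB h1 h2.
pose M := L * t * norm2 e * p.+1%:R * (norm2 a + t * norm2 e) ^+ p.
have hb : forall s, 0 <= s <= 1 -> `|G p s - G p 0| <= M * s.
  by move=> s hs; rewrite /G /M; apply: Gbound.
have := taylor1 hd hb (s := 1) (ltac:(by rewrite ler01 lexx)).
have E : G 0 1 - \sum_(k < p.+1) G k 0 / k`!%:R * 1 ^+ k =
  (phi (w + b) - taylor p phi w (w + b)) - (phi (w + a) - taylor p phi w (w + a)).
  rewrite /G /taylor /= !scale1r !scale0r !addr0.
  have -> : w + b - w = b by rewrite addrAC subrr add0r.
  have -> : w + a - w = a by rewrite addrAC subrr add0r.
  have -> : \sum_(k < p.+1) (Dk k phi w (nseq k b) - Dk k phi w (nseq k a)) / k`!%:R * 1 ^+ k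
     = \sum_(i < p.+1) i`!%:R^-1 * Dk i phi w (nseq i b) - \sum_(i < p.+1) i`!%:R^-1 * Dk i phi w (nseq i a).
    by rewrite -sumrB; apply: eq_bigr => k _; rewrite expr1n mulr1; ring.
  ring.
rewrite E expr1n mulr1 /M => h; apply: le_trans h _.
rewrite factS natrM -mulr_natr le_eqVlt; apply/orP; left; apply/eqP.
field; apply/andP; split; [by rewrite pnatr_eq0 -lt0n fact_gt0 | by rewrite addrC natr1 pnatr_eq0].
Qed.


End Core3.
Section Q1.
Variables (R : realType) (d : nat).
Local Notation V := 'rV[R]_d.

Lemma exists_nat (x : R) : exists n : nat, x < n%:R.
Proof.
exists (Num.bound `|x|); apply: le_lt_trans (ler_norm x) _; apply: archi_boundP.
exact: normr_ge0.
Qed.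

Lemma no_q1 (hd : (0 < d)%N) (psi : V -> R) (mu : R) : 0 < mu ->
  gradient_growth (fun r => mu * r `^ 1) psi -> False.
Proof.
move=> hmu [hsub hgr].
have [sg hsg] := choice hsub.
pose v : V := const_mx 1.
have v0 : v != 0.
  apply/negP => /eqP /rowP /(_ (Ordinal hd)); rewrite !mxE => /eqP; by rewrite oner_eq0.
have np := norm2_gt0 v0.
pose e0 := (norm2 v)^-1 *: v.
have ne0 : norm2 e0 = 1 by rewrite /e0 norm2Z ger0_norm ?invr_ge0 ?ltW // mulVf ?gt_eqF.
pose f z := dot e0 (sg z).
have step : forall (n k : nat), (0 < n)%N ->
    mu <= f ((k.+1%:R / n%:R) *: e0) - f ((k%:R / n%:R) *: e0).
  move=> n k n0.
  have hn : 0 < n%:R :> R by rewrite ltr0n.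
  have := hgr ((k%:R / n%:R) *: e0) ((k.+1%:R / n%:R) *: e0) _ _ (hsg _) (hsg _).
  have -> : (k%:R / n%:R) *: e0 - (k.+1%:R / n%:R) *: e0 = (- n%:R^-1) *: e0.
    by rewrite -scalerBl -natr1; congr (_ *: _); field; rewrite gt_eqF.
  have -> : (k.+1%:R / n%:R) *: e0 - (k%:R / n%:R) *: e0 = (n%:R^-1) *: e0.
    by rewrite -scalerBl -natr1; congr (_ *: _); field; rewrite gt_eqF.
  rewrite (norm2Z (- n%:R^-1) e0) ne0 mulr1 normrN powRr1 // ger0_norm ?invr_ge0 ?(ltW hn) //.
  rewrite dotZl dotBr -/(f _) -/(f _) => h.
  have hi : 0 < n%:R^-1 :> R by rewrite invr_gt0.
  by rewrite -(ler_pM2r hi) [X in _ <= X]mulrC.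
have tot : forall (n k : nat), (0 < n)%N -> k%:R * mu <= f ((k%:R / n%:R) *: e0) - f (0 *: e0).
  move=> n k n0; elim: k => [|k IH]; first by rewrite mul0r mul0r subrr.
  have := step n k n0; rewrite -natr1; lra.
have [m hm] := exists_nat ((f e0 - f 0) / mu).
have := tot m.+1 m.+1 isT.
rewrite divff ?pnatr_eq0 // scale1r scale0r.
rewrite -ler_pdivlMr // => h.
have : (m%:R : R) < m.+1%:R by rewrite ltr_nat.
lra.
Qed.

End Q1.

Lemma powdiff (R : realType) (x y : R) n : 0 <= y -> y <= x ->
  x ^+ n - y ^+ n <= n%:R * (x - y) * x ^+ n.-1.
Proof.
move=> y0 yx; have x0 : 0 <= x by apply: le_trans yx.
rewrite subrXX [_ * (x - y)]mulrC -mulrA; apply: ler_wpM2l; first by rewrite subr_ge0.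
have -> : n%:R * x ^+ n.-1 = \sum_(i < n) x ^+ n.-1.
  by rewrite sumr_const card_ord mulr_natl.
apply: ler_sum => i _.
have hi : (n.-1 - i + i = n.-1)%N by rewrite subnK // -ltnS prednK // (leq_ltn_trans _ (ltn_ord i)).
rewrite -[X in _ <= x ^+ X]hi exprD; apply: ler_wpM2l; first exact: exprn_ge0.
by rewrite lerXn2r ?nnegrE.
Qed.

Lemma lim_arg (R : realType) (X A B : R) : 0 <= B ->
  (forall t, 0 < t < 1 -> X <= A + t * B) -> X <= A.
Proof.
move=> hB h; rewrite leNgt; apply/negP => hXA.
pose t := Num.min (2^-1) ((X - A) / (B + 1)).
have hpos : 0 < (X - A) / (B + 1) by rewrite divr_gt0 ?subr_gt0 // ltr_wpDl.
have t0 : 0 < t by rewrite lt_min hpos andbT invr_gt0 ltr0n.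
have t1 : t < 1.
  apply: (le_lt_trans (y := 2^-1)); first by rewrite ge_min lexx.
  by rewrite invf_lt1 ?ltr1n // ltr0n.
have t2 : t <= (X - A) / (B + 1) by rewrite ge_min lexx orbT.
have := h t; rewrite t0 t1 => /(_ isT) hX.
have : t * B < X - A.
  apply: (le_lt_trans (y := (X - A) / (B + 1) * B)); first by rewrite ler_wpM2r.
  rewrite mulrAC ltr_pdivrMr ?ltr_wpDl //.
  rewrite mulrDr mulr1 ltrDl subr_gt0 //.
lra.
Qed.

Lemma bern (R : realType) (q : R) : exists k : nat, forall t : R, 0 < t < 1 ->
  1 - k%:R * t <= (1 - t) `^ (q - 1).
Proof.
exists (Num.bound `|q - 1|) => t /andP [t0 t1].
have s0 : 0 < 1 - t by rewrite subr_gt0.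
have s1 : 0 < 1 - t <= 1 by rewrite s0 lerBlDr lerDl ltW.
have [hq|hq] := lerP (q - 1) 0.
  apply: le_trans (_ : 1 <= _).
    by rewrite lerBlDr lerDl mulr_ge0 ?ler0n ?ltW.
  by have := @ger_powR _ (1 - t) s1 (q - 1) 0 hq; rewrite powRr0.
set k := Num.bound `|q - 1|.
have hk : q - 1 <= k%:R.
  by apply: le_trans (ler_norm _) (ltW (archi_boundP _)); exact: normr_ge0.
have e1 : (1 - t) `^ k%:R <= (1 - t) `^ (q - 1) := @ger_powR _ (1 - t) s1 _ _ hk.
apply: (le_trans _ e1); rewrite powR_mulrn; last exact: ltW s0.
have := powdiff k (ltW s0) (_ : 1 - t <= 1); rewrite expr1n.
have -> : 1 - (1 - t) = t by ring.
rewrite expr1n mulr1.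
move=> h; have h' := h (ltac:(by case/andP: s1)). lra.
Qed.

Unset Implicit Arguments.

Theorem lemma5 (R : realType) (d : nat) (hd : (0 < d)%N)
  (phi phi0 : 'rV[R]_d -> R) (p : nat) (hp : (0 < p)%N) (w : 'rV[R]_d)
  (hdiff : forall k : nat, (k < p)%N -> forall (vs : seq 'rV[R]_d) (x : 'rV[R]_d),
      differentiable (fun y => Dk k phi y vs) x)
  (hlip : exists L : R, forall x y : 'rV[R]_d,
      opnorm p (fun vs => Dk p phi x vs - Dk p phi y vs) <= L * norm2 (x - y))
  (xphi xhat : 'rV[R]_d)
  (hxphi : forall x, phi xphi + phi0 xphi <= phi x + phi0 x)
  (hxhat : forall x,
      taylor p phi w xhat + LipD p phi / (p.+1)`!%:R * norm2 (xhat - w) ^+ p.+1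
        + phi0 xhat
      <= taylor p phi w x + LipD p phi / (p.+1)`!%:R * norm2 (x - w) ^+ p.+1
        + phi0 x)
  (mu q : R) (hmu : 0 < mu) (hq : 0 < q)
  (hgrowth : gradient_growth (fun r => mu * r `^ q)
      (fun x => taylor p phi w x + LipD p phi / (p.+1)`!%:R * norm2 (x - w) ^+ p.+1
                + phi0 x)) :
  norm2 (xphi - xhat) `^ (q - 1)
    <= 2 * LipD p phi / mu * (p`!%:R)^-1 * norm2 (xphi - w) ^+ p.
Proof.
have hL := LipD_ge0 phi p.
set L := LipD p phi in hxhat hgrowth hL *.
set psi := (fun x => taylor p phi w x + L / (p.+1)`!%:R * norm2 (x - w) ^+ p.+1 + phi0 x) in hgrowth.
have [hsub hgr] := hgrowth.
have [u hu] := hsub xphi.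
have h0 : subdiff psi xhat 0 by move=> y; rewrite dot0l addr0; exact: hxhat.
have G := hgr xhat xphi u 0 hu h0.
set e := xphi - xhat in G *.
set r := norm2 (xphi - w).
have fp : 0 < p`!%:R :> R by rewrite ltr0n fact_gt0.
have r0 : 0 <= r by exact: norm2_ge0.
have ne0 : 0 <= norm2 e by exact: norm2_ge0.
set a := xphi - w.
set ne := norm2 e.
set c := L / (p.+1)`!%:R.
have hc : c * p.+1%:R = L / p`!%:R.
  rewrite /c factS natrM; field; apply/andP; split.
    by rewrite pnatr_eq0 -lt0n fact_gt0.
  by rewrite addrC natr1 pnatr_eq0.
have c0 : 0 <= c by rewrite /c divr_ge0 ?ler0n.
have key : forall t, 0 < t < 1 ->
    mu * ne `^ q * (1 - t) `^ (q - 1) <= 2 * L * ne * (r + t * ne) ^+ p / p`!%:R.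
  move=> t /andP [t0 t1].
  have s0 : 0 < 1 - t by rewrite subr_gt0.
  set rho := r + t * ne.
  set xs := xphi - t *: e.
  have [us hus] := hsub xs.
  have G1 := hgr xhat xs us 0 hus h0.
  have exs : xs - xhat = (1 - t) *: e.
    by rewrite /xs /e scalerBl scale1r addrAC.
  have exs2 : xhat - xs = - (xs - xhat) by rewrite [RHS]opprB.
  rewrite exs2 norm2N exs norm2Z ger0_norm ?(ltW s0) // subr0 dotZl in G1.
  rewrite powRM ?(ltW s0) // -/ne in G1.
  rewrite -(mulr_powRB1 (ltW s0) hq) in G1.
  have G1' : mu * ne `^ q * (1 - t) `^ (q - 1) <= dot e us.
    rewrite -(ler_pM2l s0); move: G1; rewrite -!mulrA; congr (_ <= _).
    by move: (ne `^ q) ((1 - t) `^ (q - 1)) => X Y; ring.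
  have G2 := hus xphi.
  have exs3 : xphi - xs = t *: e by rewrite /xs opprB addrC addrNK.
  rewrite exs3 dotZr (dotC us e) /psi in G2.
  have G3 := hxphi xs.
  have G4 := Rdiff hdiff hlip w a (- e) (ltW t0).
  have ew : w + a = xphi by rewrite /a addrC subrK.
  have ews : w + (a + t *: - e) = xs by rewrite addrA ew scalerN.
  rewrite ews ew norm2N -/ne -/r -/rho in G4.
  have rrho : r <= rho by rewrite /rho lerDl mulr_ge0 ?(ltW t0).
  have hte : 0 <= t * ne by rewrite mulr_ge0 ?(ltW t0).
  have G5 : r ^+ p.+1 - norm2 (xs - w) ^+ p.+1 <= p.+1%:R * (t * ne) * rho ^+ p.
    have exw : xs - w = a - t *: e by rewrite /xs /a addrAC.
    rewrite exw.
    set N := norm2 (a - t *: e).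
    have N0 : 0 <= N by exact: norm2_ge0.
    have hrN : r <= N + t * ne.
      have -> : r = norm2 ((a - t *: e) + t *: e) by rewrite subrK.
      by apply: le_trans (norm2D _ _) _; rewrite norm2Z ger0_norm ?(ltW t0).
    have R0 : 0 <= p.+1%:R * (t * ne) * rho ^+ p.
      apply: mulr_ge0; [apply: mulr_ge0 => //; exact: ler0n | apply: exprn_ge0; exact: le_trans r0 rrho].
    have [hNr|hNr] := lerP r N.
      have : r ^+ p.+1 <= N ^+ p.+1 by rewrite lerXn2r ?nnegrE.
      lra.
    have h := powdiff p.+1 N0 (ltW hNr); rewrite /= in h.
    have h2 : (r - N) * r ^+ p <= (t * ne) * rho ^+ p.
      apply: ler_pM; [by rewrite subr_ge0 ltW | exact: exprn_ge0 | lra | by rewrite lerXn2r ?nnegrE ?(le_trans r0 rrho)].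
    apply: le_trans h _; rewrite -mulrA -[X in _ <= X]mulrA; apply: ler_wpM2l => //; exact: ler0n.
  rewrite -/r -/c in G2.
  have hG4 := G4; rewrite ler_norml in hG4; case/andP: hG4 => _ hG4.
  have G5c := ler_wpM2l c0 G5.
  have hc' : c * (p.+1%:R * (t * ne) * rho ^+ p) = L * t * ne * rho ^+ p / p`!%:R.
    by rewrite !mulrA hc; ring.
  rewrite hc' in G5c.
  have H : t * dot e us <= t * (2 * L * ne * rho ^+ p / p`!%:R).
    have -> : t * (2 * L * ne * rho ^+ p / p`!%:R) = 2 * (L * t * ne * rho ^+ p / p`!%:R) by ring.
    move: G2 G3 hG4 G5c.
    set T1 := taylor p phi w xs; set T2 := taylor p phi w xphi.
    set Y := L * t * ne * rho ^+ p / p`!%:R.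
    set N1 := norm2 (xs - w) ^+ p.+1; set N2 := r ^+ p.+1.
    move=> G2 G3 hG4 G5c.
    have E1 : c * (N2 - N1) = c * N2 - c * N1 by ring.
    rewrite E1 in G5c.
    lra.
  rewrite ler_pM2l // in H.
  exact: le_trans G1' H.
set K := mu * ne `^ q in key.
have K0 : 0 <= K by apply: mulr_ge0; [exact: ltW | exact: powR_ge0].
have [k hk] := bern q.
set Q := p%:R * ne * (r + ne) ^+ p.-1.
set Z := 2 * L * ne / p`!%:R.
have Z0 : 0 <= Z by rewrite /Z !mulr_ge0 ?invr_ge0 ?ler0n.
have Q0 : 0 <= Q by rewrite /Q !mulr_ge0 ?ler0n ?exprn_ge0 ?addr_ge0.
have hpow : forall t, 0 < t < 1 -> (r + t * ne) ^+ p <= r ^+ p + t * Q.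
  move=> t /andP [t0 t1].
  have hte : 0 <= t * ne by apply: mulr_ge0 => //; exact: ltW.
  have hr : r <= r + t * ne by rewrite lerDl.
  have h := powdiff p r0 hr.
  have e1 : r + t * ne - r = t * ne by ring.
  rewrite e1 in h.
  have tne : t * ne <= ne by rewrite -[X in _ <= X]mul1r ler_wpM2r // ltW.
  have h2 : (r + t * ne) ^+ p.-1 <= (r + ne) ^+ p.-1.
    by rewrite lerXn2r ?nnegrE ?addr_ge0 // lerD2l.
  have h3 := ler_wpM2l (mulr_ge0 (ler0n _ p) hte) h2.
  rewrite /Q; move: h h3; set W1 := (r + t * ne) ^+ p.-1; set W2 := (r + ne) ^+ p.-1.
  move=> h h3; lra.
have Kle : K <= 2 * L * ne * r ^+ p / p`!%:R.
  apply: (lim_arg (B := K * k%:R + Z * Q)); first by apply: addr_ge0; apply: mulr_ge0 => //; exact: ler0n.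
  move=> t ht.
  have f1 := ler_wpM2l K0 (hk t ht).
  have f2 := ler_wpM2l Z0 (hpow t ht).
  have f3 := key t ht.
  have e3 : 2 * L * ne * (r + t * ne) ^+ p / p`!%:R = Z * (r + t * ne) ^+ p.
    by rewrite /Z; ring.
  rewrite e3 in f3.
  have -> : 2 * L * ne * r ^+ p / p`!%:R = Z * r ^+ p by rewrite /Z; ring.
  move: f1 f2 f3; set U := (1 - t) `^ (q - 1); set W := (r + t * ne) ^+ p.
  move=> f1 f2 f3; lra.
have [ne0'|nepos] := eqVneq ne 0.
  have [hq1|hq1] := eqVneq q 1.
    exfalso; rewrite hq1 in hgrowth; exact: (@no_q1 R d hd psi mu hmu hgrowth).
  rewrite ne0' powR0 ?subr_eq0 //.
  apply: mulr_ge0; last exact: exprn_ge0.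
  apply: mulr_ge0; last by rewrite invr_ge0 ler0n.
  by apply: divr_ge0; [apply: mulr_ge0 | exact: ltW].
have negt : 0 < ne by rewrite lt_neqAle eq_sym nepos ne0.
have hm : 0 < mu * ne by apply: mulr_gt0.
rewrite -(ler_pM2l hm).
have -> : mu * ne * (2 * L / mu / p`!%:R * r ^+ p) = 2 * L * ne * r ^+ p / p`!%:R.
  by field; rewrite !gt_eqF.
apply: le_trans Kle; rewrite /K -(mulr_powRB1 ne0 hq) mulrA.
exact: lexx.
Qed.
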